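(* Let $G$ be a finite simple graph which has a perfect matching. Then Dom has a winning strategy in the Bicolored Domination Game on $G$, both in the Sepy-start and in the Dom-start version.
   Context: For a vertex $v$ of a graph $G$, $N[v]$ denotes its closed neighborhood. The Bicolored Domination Game on an isolate-free graph $G$ is played by Dom and Sepy, who alternately color vertices; Dom may only use color $p$ and Sepy may only use color $b$. $V_p,V_b$ denote the current sets of vertices of each color. A player with color $c$ makes a move by choosing a vertex $v$ such that (i) $v$ is uncolored and (ii) there exists $u\in N[v]$ with $N[u]\cap V_c=\emptyset$ (before the move); then $v$ gets color $c$. The game terminates as soon as one of the following holds: (s* ) some vertex $v$ has $N[v]\subseteq V_p$ or $N[v]\subseteq V_b$ — Sepy wins; (d** ) for some $c\in\{p,b\}$, $V_c$ dominates all vertices of $G$ and no vertex $v$ satisfies $N[v]\subseteq V_c$ — Dom wins. In the Dom-start (Sepy-start) version Dom (Sepy) moves first. *)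

(* Defs.v *)
From mathcomp Require Import all_boot.
Set Implicit Arguments. Unset Strict Implicit. Unset Printing Implicit Defensive.

Definition simple_graph (T : finType) (e : rel T) : Prop :=
  symmetric e /\ irreflexive e.

Definition cnbh (T : finType) (e : rel T) (v : T) : {set T} :=
  [set u | (u == v) || e v u].

Definition perfect_matching (T : finType) (e : rel T) (M : {set {set T}}) : Prop :=
  [/\ forall E, E \in M -> exists x y, e x y /\ E = [set x; y],
      trivIset M & cover M = [set: T]].

Definition has_perfect_matching (T : finType) (e : rel T) : Prop :=
  exists M, perfect_matching e M.

(* Players / colours: Dom uses colour p, Sepy uses colour b. *)
Inductive player := Dom | Sepy.

Definition other (c : player) := if c is Dom then Sepy else Dom.

Section Game.
Variables (T : finType) (e : rel T).

Local Notation N := (cnbh e).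

Definition col (c : player) (Vp Vb : {set T}) : {set T} :=
  if c is Dom then Vp else Vb.

Definition sepy_term (Vp Vb : {set T}) : bool :=
  [exists v, (N v \subset Vp) || (N v \subset Vb)].

Definition dominates_all (V : {set T}) : bool :=
  [forall v, N v :&: V != set0].

Definition dom_term (Vp Vb : {set T}) : bool :=
  [exists c : bool,
     let V := if c then Vp else Vb in
     dominates_all V && [forall v, ~~ (N v \subset V)]].

Definition legal (c : player) (Vp Vb : {set T}) (v : T) : bool :=
  (v \notin Vp) && (v \notin Vb) &&
  [exists u in N v, N u :&: col c Vp Vb == set0].

(* The game terminates as soon as (s-star) or (d-star-star) holds
   (these are in fact mutually exclusive; (s-star) is checked first).  Since
   every move colours a new vertex, the game is finite and this inductive
   (least fixed point) definition is exactly "Dom has a winning strategy". *)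
Inductive dom_wins : player -> {set T} -> {set T} -> Prop :=
  | dw_term c Vp Vb :
      ~~ sepy_term Vp Vb -> dom_term Vp Vb -> dom_wins c Vp Vb
  | dw_dom Vp Vb v :
      ~~ sepy_term Vp Vb -> ~~ dom_term Vp Vb -> legal Dom Vp Vb v ->
      dom_wins Sepy (v |: Vp) Vb -> dom_wins Dom Vp Vb
  | dw_sepy Vp Vb :
      ~~ sepy_term Vp Vb -> ~~ dom_term Vp Vb ->
      (exists v, legal Sepy Vp Vb v) ->
      (forall v, legal Sepy Vp Vb v -> dom_wins Dom Vp (v |: Vb)) ->
      dom_wins Sepy Vp Vb.

End Game.

(* Main.v *)
Require Import Defs.
From mathcomp Require Import all_boot.
Set Implicit Arguments. Unset Strict Implicit. Unset Printing Implicit Defensive.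

Section Pf.
Variables (T : finType) (e : rel T) (m : T -> T).
Hypotheses (esym : symmetric e) (eirr : irreflexive e)
  (em : forall x, e x (m x)) (mK : involutive m).

Local Notation N := (cnbh e).

Lemma inN x y : (y \in N x) = (y == x) || e x y.
Proof. by rewrite /cnbh inE. Qed.
Lemma N_self x : x \in N x. Proof. by rewrite inN eqxx. Qed.
Lemma N_m x : m x \in N x. Proof. by rewrite inN em orbT. Qed.
Lemma N_sym x y : y \in N x -> x \in N y.
Proof. by rewrite !inN eq_sym esym. Qed.
Lemma m_neq x : m x != x.
Proof. apply/eqP => h. by move: (em x); rewrite h eirr. Qed.

Definition pd (V : {set T}) x := N x :&: V != set0.

Lemma pdP (V : {set T}) x : reflect (exists2 y, y \in N x & y \in V) (pd V x).
Proof.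
apply: (iffP (set0Pn _)) => [[y]|[y h1 h2]]; last by exists y; rewrite inE h1.
by rewrite inE => /andP[]; exists y.
Qed.

Lemma pd_mon (V W : {set T}) x : V \subset W -> pd V x -> pd W x.
Proof. move=> s /pdP[y h1 h2]; apply/pdP; exists y => //; exact: (subsetP s). Qed.

Definition Inv (Vp Vb : {set T}) :=
  [/\ (forall x, x \in Vp -> x \notin Vb), (forall x, x \in Vp -> m x \notin Vp) &
      (forall x, x \in Vb -> m x \notin Vp -> pd Vp x && pd Vp (m x))].

Lemma no_sepy (Vp Vb : {set T}) : (forall x, x \in Vp -> x \notin Vb) ->
  (forall x, x \in Vp -> m x \notin Vp) ->
  (forall x, x \in Vb -> m x \in Vb -> pd Vp x) -> ~~ sepy_term e Vp Vb.
Proof.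
move=> dj I1 I2; apply/existsPn => x; apply/negP => /orP[] /subsetP s.
  by move: (I1 x (s x (N_self x))); rewrite s ?N_m.
case/pdP: (I2 x (s x (N_self x)) (s _ (N_m x))) => y /s yb yp.
by move: (dj y yp); rewrite yb.
Qed.

Lemma Inv_nosepy (Vp Vb : {set T}) : Inv Vp Vb -> ~~ sepy_term e Vp Vb.
Proof.
case=> dj I1 I2; apply: no_sepy => // x xb mxb.
have : m x \notin Vp by apply/negP => /dj; rewrite mxb.
by case/(I2 x xb)/andP.
Qed.

Lemma dom_term_p (Vp Vb : {set T}) : ~~ sepy_term e Vp Vb -> dominates_all e Vp -> dom_term e Vp Vb.
Proof.
move=> ns da; apply/existsP; exists true => /=; rewrite da /=.
apply/forallP => v; apply: contra ns => s; apply/existsP; exists v; by rewrite s.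
Qed.

Lemma dom_term_b (Vp Vb : {set T}) : ~~ sepy_term e Vp Vb -> dominates_all e Vb -> dom_term e Vp Vb.
Proof.
move=> ns da; apply/existsP; exists false => /=; rewrite da /=.
apply/forallP => v; apply: contra ns => s; apply/existsP; exists v; by rewrite s orbT.
Qed.

Lemma sepy_move (Vp Vb : {set T}) : ~~ sepy_term e Vp Vb -> ~~ dom_term e Vp Vb ->
  exists v, legal e Sepy Vp Vb v.
Proof.
move=> ns nd.
suff /existsP[v hv] : [exists v, legal e Sepy Vp Vb v] by exists v.
apply: contraNT nd => nl; apply: dom_term_b => //.
apply/forallP => u; apply/negP => /eqP h0.
case: (boolP [exists x in N u, x \notin Vp]) => [/existsP[x /andP[xN xp]]|].
  have xb : x \notin Vb.
    apply/negP => xb; have : x \in N u :&: Vb by rewrite inE xN xb.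
    by rewrite h0 inE.
  move/existsPn: nl => /(_ x); rewrite /legal xp xb /=.
  case/negP; apply/existsP; exists u; rewrite N_sym //= h0 //.
move/existsPn => h; move/existsPn: ns => /(_ u); case/negP.
apply/orP; left; apply/subsetP => x xN; move: (h x); by rewrite xN negbK.
Qed.

Lemma cnt (X : {set T}) v : v \notin X -> #|~: (v |: X)| < #|~: X|.
Proof.
move=> vX; apply: proper_card; rewrite properE; apply/andP; split.
  by rewrite setCS subsetUr.
apply/negP => /subsetP /(_ v); rewrite !inE eqxx vX /=.
by move/(_ isT).
Qed.

Lemma main n (Vp Vb : {set T}) : #|~: (Vp :|: Vb)| < n -> Inv Vp Vb ->
  dom_wins e Dom Vp Vb /\ dom_wins e Sepy Vp Vb.
Proof.
elim: n Vp Vb => // n IH Vp Vb; rewrite ltnS => hc inv.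
have ns := Inv_nosepy inv.
case: inv => dj I1 I2.
case: (boolP (dom_term e Vp Vb)) => hd; first by split; exact: dw_term.
split.
  have [u nu] : exists u, ~~ pd Vp u.
    suff /existsP[u hu] : [exists u, ~~ pd Vp u] by exists u.
    apply: contraNT hd => /existsPn h; apply: dom_term_p => //.
    apply/forallP => u; by move: (h u) => /negPn.
  have up : u \notin Vp.
    apply: contra nu => up; apply/pdP; exists u => //; exact: N_self.
  have mup : m u \notin Vp.
    apply: contra nu => up'; apply/pdP; exists (m u) => //; exact: N_m.
  have ub : u \notin Vb.
    by apply/negP => ub; move: (I2 u ub mup); rewrite (negbTE nu).
  apply: (dw_dom (v := u) ns hd).
    rewrite /legal up ub /=; apply/existsP; exists u; rewrite N_self /=.
    by move: nu; rewrite /pd negbK.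
  apply: (IH _ _ _ _).2.
    apply: leq_trans hc; rewrite -setUA; apply: cnt; by rewrite inE negb_or up ub.
  split.
  - move=> x; rewrite in_setU1 => /orP[/eqP->|]; [exact: ub | exact: dj].
  - move=> x; rewrite !in_setU1 => /orP[/eqP->|xp]; rewrite negb_or.
      by rewrite m_neq.
    rewrite I1 // andbT; apply/eqP => h; move: xp; rewrite -(mK x) h.
    by rewrite (negbTE mup).
  - move=> x xb; rewrite in_setU1 negb_or => /andP[_ mxp].
    case/andP: (I2 x xb mxp) => h1 h2.
    by rewrite !(pd_mon (subsetUr [set u] Vp)).
apply: (dw_sepy ns hd (sepy_move ns hd)) => v.
rewrite /legal /= => /andP[/andP[vp vb] _].
have hcv : #|~: (Vp :|: (v |: Vb))| < #|~: (Vp :|: Vb)|.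
  by rewrite setUCA; apply: cnt; rewrite inE negb_or vp vb.
case: (boolP ((m v \in Vp) || (pd Vp v && pd Vp (m v)))) => hv.
  apply: (IH _ _ _ _).1; first exact: leq_trans hcv hc.
  split => //.
  - move=> x xp; rewrite in_setU1 negb_or dj // andbT.
    by apply/negP => /eqP xv; move: vp; rewrite -xv xp.
  - move=> x; rewrite in_setU1 => /orP[/eqP->|xb mxp]; last exact: I2.
    move=> mvp; move: hv; by rewrite (negbTE mvp).
set w := m v.
move: hv; rewrite negb_or => /andP[wp hpd].
have wb : w \notin Vb.
  apply/negP => wb; move: (I2 w wb); rewrite /w mK => /(_ vp).
  by rewrite andbC (negbTE hpd).
have wv : w != v by exact: m_neq.
have wvb : w \notin v |: Vb by rewrite in_setU1 negb_or wv wb.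
have ns' : ~~ sepy_term e Vp (v |: Vb).
  apply: no_sepy => //.
  - move=> x xp; rewrite in_setU1 negb_or dj // andbT.
    by apply/negP => /eqP xv; move: vp; rewrite -xv xp.
  move=> x; rewrite in_setU1 => /orP[/eqP->|xb].
    by rewrite -/w (negbTE wvb).
  rewrite in_setU1 => /orP[/eqP h|mxb].
    by move: xb; rewrite -(mK x) h -/w (negbTE wb).
  have : m x \notin Vp by apply/negP => /dj; rewrite mxb.
  by case/(I2 x xb)/andP.
case: (boolP (dom_term e Vp (v |: Vb))) => hd'; first exact: dw_term.
apply: (dw_dom (v := w) ns' hd').
  rewrite /legal (negbTE wp) (negbTE wvb) /=; apply/existsP.
  case: (boolP (pd Vp v)) => pv.
    exists w; rewrite N_self /=; move: hpd; rewrite pv /= /pd negbK; done.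
  exists v; rewrite N_sym ?N_m //=; move: pv; rewrite /pd negbK; done.
apply: (IH _ _ _ _).2.
  apply: leq_trans _ hc; apply: leq_trans _ hcv; apply: ltnW; rewrite -setUA; apply: cnt.
  by rewrite inE negb_or wp wvb.
split.
- move=> x; rewrite in_setU1 => /orP[/eqP->|xp] //.
  rewrite in_setU1 negb_or dj // andbT.
  by apply/negP => /eqP xv; move: vp; rewrite -xv xp.
- move=> x; rewrite !in_setU1 => /orP[/eqP->|xp]; rewrite negb_or.
    by rewrite /w mK eq_sym wv vp.
  rewrite I1 // andbT; apply/eqP => h; move: xp; rewrite -(mK x) h /w mK.
  by rewrite (negbTE vp).
- move=> x; rewrite in_setU1 => /orP[/eqP->|xb].
    by rewrite -/w in_setU1 eqxx.
  rewrite in_setU1 negb_or => /andP[_ mxp].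
  case/andP: (I2 x xb mxp) => h1 h2.
  by rewrite !(pd_mon (subsetUr [set w] Vp)).
Qed.

End Pf.

Theorem proposition11 (T : finType) (e : rel T) :
  simple_graph e -> has_perfect_matching e ->
  dom_wins e Sepy set0 set0 /\ dom_wins e Dom set0 set0.
Proof.
case=> esym eirr [M [HM triv cov]].
have ex : forall x, exists y, e x y && ([set x; y] \in M).
  move=> x; have : x \in cover M by rewrite cov inE.
  case/bigcupP => B BM xB; case: (HM B BM) => a [b [eab BE]].
  move: xB; rewrite BE in_set2 => /orP[]/eqP ->.
    by exists b; rewrite eab -BE BM.
  by exists a; rewrite esym eab setUC -BE BM.
pose m x := odflt x [pick y | e x y && ([set x; y] \in M)].
have mP : forall x, e x (m x) && ([set x; m x] \in M).
  move=> x; rewrite /m; case: pickP => [y //|h].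
  by case: (ex x) => y; rewrite h.
have em : forall x, e x (m x) by move=> x; case/andP: (mP x).
have mK : involutive m.
  move=> x; case/andP: (mP x) => _ h1; case/andP: (mP (m x)) => e2 h2.
  have eqB : [set x; m x] = [set m x; m (m x)].
    apply/eqP; apply/negPn/negP => neq.
    move/trivIsetP: triv => /(_ _ _ h1 h2 neq) /disjointFr.
    by move/(_ (m x)); rewrite !in_set2 eqxx orbT => /(_ isT).
  have : m (m x) \in [set x; m x] by rewrite eqB in_set2 eqxx orbT.
  rewrite in_set2 => /orP[/eqP //|/eqP h]; by move: e2; rewrite h eirr.
have := main esym eirr em mK (n := #|T|.+1) (Vp := set0) (Vb := set0).
case.
- by rewrite ltnS max_card.
- by split=> x; rewrite inE.
- by move=> *; split.
Qed.
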